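(* Let $M>0$, $\mu>0$, $n\in\{0,1,2,\dots\}$, and let $m,k\in\{0,1,2,\dots\}$ with $$m\geq 2k+1+\sqrt{6k^2+6k+1},$$ and put $l=m+k$. Let $a\in[0,M)$ satisfy $$1>\frac{a}{M}>\frac{2\sqrt6}{5}\,\frac{\sqrt{1+\frac{1}{m}\left[2k+1+\frac{k(k+1)}{m}\right]}}{1+\frac{2/5}{m}\left[2k+1+\frac{k(k+1)}{m}\right]}.$$ Define $\alpha_1=\frac{ma}{\mu M^2}$, $\alpha_2=\frac{2n+1}{\mu M}\sqrt{1-\frac{a^2}{M^2}}$, $\alpha=\alpha_1-i\alpha_2$, $\epsilon=2\sqrt{1-\frac{a^2}{M^2}}$, $\beta=6-\frac{l(l+1)}{\mu^2M^2}$, and, when $\beta\geq0$, $$q(z)=z^4+\frac{4z}{\beta+\epsilon}\left[(2+\epsilon)(z^2+1)+\alpha(z^2-1)\right]+2\,\frac{16-\beta+3\epsilon}{\beta+\epsilon}\,z^2+1,\quad z\in\mathbb{C}.$$ Then the open interval $$I=\left(\sqrt{\tfrac16\,l(l+1)}\,,\ \frac{\frac{ma}{M}}{2\left(1+\sqrt{1-\frac{a^2}{M^2}}\right)}\right)$$ is non-empty, and for every $\mu$ with $\mu M\in I$, the open first quadrant $\{z\in\mathbb{C}:\mathrm{Re}(z)>0,\ \mathrm{Im}(z)>0\}$ contains precisely $1$ root of $q$. (Note $\frac{2\sqrt6}{5}\approx0.979796$.) *)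

(* Defs.v *)
From HB Require Import structures.
From mathcomp Require Import all_boot all_order all_algebra.
From mathcomp Require Import complex.
Set Implicit Arguments. Unset Strict Implicit. Unset Printing Implicit Defensive.
Import Order.TTheory GRing.Theory Num.Theory.
Local Open Scope ring_scope.

Section Defs.
Variable R : rcfType.

Definition Kmk (m k : nat) : R :=
  (m%:R)^-1 * ((2 * k + 1)%:R + (k * (k + 1))%:R / m%:R).

Definition a_bound (m k : nat) : R :=
  (2 * Num.sqrt 6 / 5) * Num.sqrt (1 + Kmk m k) / (1 + (2 / 5) * Kmk m k).

Definition alpha1 (M mu a : R) (m : nat) : R := m%:R * a / (mu * M ^+ 2).
Definition alpha2 (M mu a : R) (n : nat) : R :=
  (2 * n + 1)%:R / (mu * M) * Num.sqrt (1 - a ^+ 2 / M ^+ 2).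
Definition alphaC (M mu a : R) (m n : nat) : R[i] :=
  (alpha1 M mu a m +i* (- alpha2 M mu a n))%C.
Definition epsR (M a : R) : R := 2 * Num.sqrt (1 - a ^+ 2 / M ^+ 2).
Definition betaR (M mu : R) (l : nat) : R := 6 - (l * (l + 1))%:R / (mu ^+ 2 * M ^+ 2).

Definition qKerr (M mu a : R) (m k n : nat) : {poly R[i]} :=
  let l := (m + k)%N in
  let e := epsR M a in
  let b := betaR M mu l in
  let al := alphaC M mu a m n in
  'X^4
  + ((4 / (b + e))%:C)%C%:P * 'X
      * (((2 + e)%:C)%C%:P * ('X^2 + 1) + al%:P * ('X^2 - 1))
  + ((2 * (16 - b + 3 * e) / (b + e))%:C)%C%:P * 'X^2
  + 1.

Definition I_low (m k : nat) : R := Num.sqrt ((6%:R)^-1 * ((m + k) * (m + k + 1))%:R).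
Definition I_high (M a : R) (m : nat) : R :=
  (m%:R * a / M) / (2 * (1 + Num.sqrt (1 - a ^+ 2 / M ^+ 2))).

End Defs.

(* Main.v *)
Require Import Defs.
From HB Require Import structures.
Set Warnings "-notation-overridden -ambiguous-paths -deprecated".
From mathcomp Require Import all_boot all_order all_algebra.
From mathcomp Require Import complex.
From mathcomp Require Import polyorder polyrcf qe_rcf_th.
From mathcomp Require Import ring lra zify.
Set Implicit Arguments. Unset Strict Implicit. Unset Printing Implicit Defensive.
Import Order.TTheory GRing.Theory Num.Theory.
Local Open Scope ring_scope.

Section C.
Variable R : rcfType.
Implicit Types (p q : {poly R}).

Lemma sgzV' (x : R) : sgz (x^-1) = sgz x.
Proof. by rewrite !sgz_def invr_lt0 invr_eq0. Qed.

Lemma jump_modp q p x : jump q p x = jump (q %% p) p x.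
Proof. by rewrite jump_mod modpE jump_mulCp -exprVn sgzX sgzV'. Qed.

Lemma jump_addmul q r p x : jump (q + r * p) p x = jump q p x.
Proof. by rewrite jump_modp modpD modp_mull addr0 -jump_modp. Qed.

Lemma jump_posmul (N V P : {poly R}) x : (forall y, 0 < N.[y]) -> jump (N * V) P x = jump V P x.
Proof.
move=> Npos.
have N0 : N != 0 by apply/eqP => N0; have := Npos 0; rewrite N0 horner0 ltxx.
have rN : ~~ root N x by rewrite /root gt_eqF.
rewrite /jump.
have [->|V0] := eqVneq V 0; first by rewrite mulr0 eqxx.
have NV0 : N * V != 0 by rewrite mulf_neq0.
rewrite NV0 mu_mul // (_ : \mu_x N = 0%N); last first.
  by apply/eqP; rewrite -leqn0 leqNgt mu_gt0.
rewrite add0n -mulrA sgp_right_mul sgp_rightNroot // gtr0_sg ?mul1r //.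
Qed.

Lemma sgz_sq (b : R) : b != 0 -> sgz b * sgz b = 1.
Proof. by move=> b0; case: sgzP b0. Qed.

Lemma cindexR_lin (U V : {poly R}) (a b : R) : b != 0 ->
  cindexR (('X - a%:P) * U + b *: V) (('X - a%:P) * V - b *: U)
  = cindexR U V + sgz b * crossR ((('X - a%:P) * V - b *: U) * V).
Proof.
move=> b0; set L := 'X - a%:P; set Q := L * U + b *: V; set P := L * V - b *: U.
have Npos : forall y, 0 < (L * L + (b ^+ 2)%:P).[y].
  move=> y; rewrite hornerD hornerM hornerC.
  have := sqr_ge0 L.[y]; have : 0 < b ^+ 2 by rewrite exprn_even_gt0.
  rewrite expr2; nra.
have st1 : forall x, jump Q P x = sgz b * jump V P x.
  move=> x.
  have e : b *: Q = (L * L + (b ^+ 2)%:P) * V + (- L) * P.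
    rewrite /Q /P -!mul_polyC rmorphXn /=; ring.
  have := jump_mulCp b Q P x; rewrite e jump_addmul jump_posmul // => ->.
  by rewrite mulrA sgz_sq // mul1r.
have st2 : forall y, jump (next_mod P V) V y = - jump P V y.
  move=> y; rewrite /next_mod jump_mulCp sgzN sgzX [jump P V y]jump_mod.
  by rewrite mulNr.
have st3 : forall y, jump P V y = - sgz b * jump U V y.
  move=> y; rewrite /P addrC -scaleNr jump_addmul jump_mulCp sgzN //.
rewrite /cindexR.
under eq_bigr do rewrite st1.
rewrite -big_distrr /= -/(cindexR V P) cindexR_rec /cindexR.
rewrite (eq_bigr _ (fun y _ => st2 y)).
under eq_bigr do rewrite st3.
rewrite mulrDr addrC; congr (_ + _).
rewrite big_distrr /=; apply: eq_bigr => x _.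
by rewrite mulNr opprK mulrA sgz_sq // mul1r.
Qed.
End C.
Definition bz (b : bool) : int := Posz (nat_of_bool b).

Definition Eform (sb vp vm pp pm e : int) :=
  sb + (bz (vp < 0) - bz (e * vm < 0)) =
  sb * ((pp * vp) * bz ((pm * vm) * (pp * vp) < 0)) + (bz (pp < 0) - bz (- e * pm < 0)).

Lemma EidA sb e : sb \in [:: 1; -1] -> e \in [:: 1; -1] -> Eform sb 0 0 (- sb) (e * - sb) e.
Proof. by rewrite !inE => /orP[]/eqP-> /orP[]/eqP->. Qed.

Lemma EidB sb e vp vm : sb \in [:: 1; -1] -> e \in [:: 1; -1] ->
  vp \in [:: 1; -1] -> vm \in [:: 1; -1] -> Eform sb vp vm (- sb) (e * - sb) e.
Proof. by rewrite !inE => /orP[]/eqP-> /orP[]/eqP-> /orP[]/eqP-> /orP[]/eqP->. Qed.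

Lemma EidC sb e vp pp : sb \in [:: 1; -1] -> e \in [:: 1; -1] ->
  vp \in [:: 1; -1] -> pp \in [:: 1; -1] -> (vp == sb) || (pp == vp) ->
  Eform sb vp (- e * vp) pp (e * pp) e.
Proof. by rewrite !inE => /orP[]/eqP-> /orP[]/eqP-> /orP[]/eqP-> /orP[]/eqP->. Qed.

Lemma EidD sb e pp pm : sb \in [:: 1; -1] -> e \in [:: 1; -1] ->
  (pp == 0) && (pm == 0) || (pp \in [:: 1; -1]) && (pm \in [:: 1; -1]) ->
  Eform sb sb (- e * sb) pp pm e.
Proof.
rewrite !inE => /orP[]/eqP-> /orP[]/eqP-> /orP[/andP[/eqP-> /eqP->]|/andP[/orP[]/eqP-> /orP[]/eqP->]] //.
Qed.

Section Estep.
Variable R : rcfType.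
Implicit Types (U V W : {poly R}).

Definition sp W : int := sgz (lead_coef W).
Definition sm W : int := sgz ((-1) ^+ (size W).-1 * lead_coef W).
Definition Ep W (n : nat) : int := bz (sp W < 0) - bz ((-1) ^+ n * sm W < 0).

Lemma crossR_int W : crossR W = sp W * bz (sm W * sp W < 0).
Proof.
rewrite /crossR /variation /sgp_minfty /sgp_pinfty /sp /sm sgz_sgr /bz.
by rewrite !sgrEz -rmorphM /= ltrz0.
Qed.

Lemma spM U V : sp (U * V) = sp U * sp V.
Proof. by rewrite /sp lead_coefM sgzM. Qed.

Lemma smM U V : sm (U * V) = sm U * sm V.
Proof.
rewrite /sm.
have [->|U0] := eqVneq U 0; first by rewrite mul0r lead_coef0 !mulr0 sgz0 mul0r.
have [->|V0] := eqVneq V 0; first by rewrite mulr0 lead_coef0 !mulr0 sgz0 mulr0.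
rewrite size_mul // lead_coefM -sgzM; congr sgz.
rewrite [size U]polySpred // [size V]polySpred // addSn /= addnS /= exprD.
by rewrite mulrACA.
Qed.

Lemma sgz_pm1 (x : R) : x != 0 -> sgz x \in [:: 1; -1].
Proof. by case: sgzP. Qed.

Lemma sgz_sign n : sgz ((-1) ^+ n : R) = (-1) ^+ n.
Proof. by rewrite sgzX sgzN1. Qed.

Lemma sign_in n : ((-1) ^+ n : int) \in [:: 1; -1].
Proof. by rewrite -signr_odd; case: odd. Qed.

Lemma E_step U V a b n : b != 0 -> lead_coef U = 1 -> size U = n.+1 -> (size V <= n)%N ->
  sgz b + Ep V n = sgz b * crossR ((('X - a%:P) * V - b *: U) * V)
                   + Ep (('X - a%:P) * V - b *: U) n.+1.
Proof.
move=> b0 lU sU sV.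
set L := 'X - a%:P; set P := L * V - b *: U.
rewrite crossR_int spM smM /Ep exprS mulN1r.
set e : int := (-1) ^+ n.
suff : Eform (sgz b) (sp V) (sm V) (sp P) (sm P) e by [].
have sb := sgz_pm1 b0; have se : e \in [:: 1; -1] by apply: sign_in.
have U0 : U != 0 by rewrite -size_poly_gt0 sU.
have hsbU : size (b *: U) = n.+1 by rewrite size_scale.
have lbU : lead_coef (b *: U) = b by rewrite lead_coefZ lU mulr1.
have [V0|V0] := eqVneq V 0.
  have -> : P = - (b *: U) by rewrite /P V0 mulr0 sub0r.
  have -> : sp V = 0 by rewrite V0 /sp lead_coef0 sgz0.
  have -> : sm V = 0 by rewrite V0 /sm lead_coef0 mulr0 sgz0.
  have -> : sp (- (b *: U)) = - sgz b by rewrite /sp lead_coefN lbU sgzN.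
  have -> : sm (- (b *: U)) = e * - sgz b.
    by rewrite /sm size_polyN lead_coefN hsbU lbU /= sgzM sgz_sign sgzN.
  exact: (EidA sb se).
have sL : size L = 2%N by rewrite size_XsubC.
have sLV : size (L * V) = (size V).+1.
  by rewrite size_mul ?polyXsubC_eq0 // sL.
have lLV : lead_coef (L * V) = lead_coef V by rewrite lead_coefM lead_coefXsubC mul1r.
have lV0 : lead_coef V != 0 by rewrite lead_coef_eq0.
have [Vlt|Veq] := ltnP (size V) n.
  have sPb : (size (L * V)%R < size (- (b *: U))%R)%N by rewrite size_polyN hsbU sLV.
  have lP : lead_coef P = - b by rewrite /P addrC lead_coefDl // lead_coefN lbU.
  have sP : size P = n.+1 by rewrite /P addrC size_polyDl // size_polyN.
  have -> : sp P = - sgz b by rewrite /sp lP sgzN.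
  have -> : sm P = e * - sgz b by rewrite /sm lP sP /= sgzM sgz_sign sgzN.
  apply: (EidB sb se); first exact: sgz_pm1.
  by apply: sgz_pm1; rewrite mulf_neq0 ?signr_eq0.
have Vn : size V = n by apply/eqP; rewrite eqn_leq sV.
have n0 : (0 < n)%N by rewrite -Vn size_poly_gt0.
have -> : sm V = - e * sp V.
  rewrite /sm /sp Vn sgzM sgz_sign /e -[in RHS](prednK n0) exprS mulN1r opprK //.
have PnE : P`_n = lead_coef V - b.
  rewrite /P coefB coefZ -Vn -lLV lead_coefE sLV /=.
  by rewrite Vn (_ : U`_n = 1) ?mulr1 // -lU lead_coefE sU.
have sPle : (size P <= n.+1)%N.
  by rewrite /P (leq_trans (size_polyD _ _)) // geq_max size_polyN hsbU sLV Vn leqnn.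
have [lVb|lVb] := eqVneq (lead_coef V) b.
  have -> : sp V = sgz b by rewrite /sp lVb.
  apply: (EidD sb se).
  have [->|P0] := eqVneq P 0; first by rewrite /sp /sm lead_coef0 mulr0 sgz0 eqxx.
  have l0 : lead_coef P != 0 by rewrite lead_coef_eq0.
  by rewrite /sp /sm !sgz_pm1 ?orbT // mulf_neq0 ?signr_eq0.
have Pn0 : P`_n != 0 by rewrite PnE subr_eq0.
have sP : size P = n.+1.
  by apply/eqP; rewrite eqn_leq sPle /= ltnNge; apply: contra Pn0 => h; rewrite nth_default.
have lP : lead_coef P = lead_coef V - b by rewrite lead_coefE sP /= PnE.
have -> : sm P = e * sp P by rewrite /sm /sp sP /= sgzM sgz_sign.
apply: (EidC sb se); first exact: sgz_pm1.
  by apply: sgz_pm1; rewrite lP subr_eq0.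
rewrite /sp lP; move: lVb lV0 b0; set c := lead_coef V => cb c0 b0'.
case: (sgzP c) c0 => // hc _; case: (sgzP b) b0' => // hb _; rewrite ?eqxx //=.
  by rewrite gtr0_sgz // subr_gt0 (lt_trans hb hc).
by rewrite ltr0_sgz // subr_lt0 (lt_trans hc hb).
Qed.
End Estep.
Section CP.
Variable R : rcfType.
Local Notation C := R[i].
Local Open Scope complex_scope.

Definition cp (A : {poly R}) : {poly C} := map_poly (real_complex R) A.
Definition Rp (p : {poly C}) : {poly R} := \poly_(k < size p) complex.Re p`_k.
Definition Ip (p : {poly C}) : {poly R} := \poly_(k < size p) complex.Im p`_k.

Lemma coef_Rp p k : (Rp p)`_k = complex.Re p`_k.
Proof. by rewrite coef_poly; case: ltnP => // h; rewrite nth_default. Qed.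
Lemma coef_Ip p k : (Ip p)`_k = complex.Im p`_k.
Proof. by rewrite coef_poly; case: ltnP => // h; rewrite nth_default. Qed.

Lemma coef_cpi A B k : (cp A + 'i%:P * cp B)`_k = (A`_k +i* B`_k)%C.
Proof.
rewrite coefD coefCM !coef_map /=.
by apply/eqP; rewrite eq_complex /= !(mul0r, mul1r, subr0, addr0, add0r, mulr0, subrr) !eqxx.
Qed.

Lemma Rp_cpi A B : Rp (cp A + 'i%:P * cp B) = A.
Proof. by apply/polyP => k; rewrite coef_Rp coef_cpi. Qed.
Lemma Ip_cpi A B : Ip (cp A + 'i%:P * cp B) = B.
Proof. by apply/polyP => k; rewrite coef_Ip coef_cpi. Qed.

Lemma decomp p : p = cp (Rp p) + 'i%:P * cp (Ip p).
Proof.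
apply/polyP => k; rewrite coef_cpi coef_Rp coef_Ip.
by case: (p`_k).
Qed.

Lemma horner_Rp p (x : R) : (Rp p).[x] = complex.Re p.[x%:C].
Proof.
rewrite {2}(decomp p) hornerD hornerM hornerC !horner_map /=.
by rewrite !(mul0r, mul1r, subr0, addr0, add0r, mulr0, subrr).
Qed.
Lemma horner_Ip p (x : R) : (Ip p).[x] = complex.Im p.[x%:C].
Proof.
rewrite {2}(decomp p) hornerD hornerM hornerC !horner_map /=.
by rewrite !(mul0r, mul1r, subr0, addr0, add0r, mulr0, subrr).
Qed.

Lemma prod_step h r :
  ('X - r%:P) * h =
  cp (('X - (complex.Re r)%:P) * Rp h + (complex.Im r)%:P * Ip h)
  + 'i%:P * cp (('X - (complex.Re r)%:P) * Ip h - (complex.Im r)%:P * Rp h).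
Proof.
rewrite {1}(decomp h).
have er : r%:P = cp (complex.Re r)%:P + 'i%:P * cp (complex.Im r)%:P.
  by apply/polyP => k; rewrite coef_cpi !coefC; case: (k == 0)%N; case: r.
have eX : 'X = cp 'X by rewrite /cp map_polyX.
rewrite er eX /cp !rmorphD !rmorphM !rmorphB !rmorphN !rmorphM /=.
set I := 'i%:P; set X' := map_poly _ 'X; set a := map_poly _ (complex.Re r)%:P.
set b := map_poly _ (complex.Im r)%:P.
set U := map_poly _ (Rp h); set V := map_poly _ (Ip h).
have II : I * I + 1 = 0.
  have ii : ('i * 'i : C) = -1.
    by apply/eqP; rewrite eq_complex /= !(mul0r, mul1r, subr0, addr0, add0r, mulr0, subrr, oppr0, sub0r) !eqxx.
  by rewrite /I -polyCM ii polyCN polyC1 addNr.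
transitivity ((X' - a) * U + b * V + I * ((X' - a) * V - b * U) - (I * I + 1) * (b * V)).
  ring.
by rewrite II mul0r subr0.
Qed.

Lemma size_Ip_le (p : {poly C}) n : (size p <= n.+1)%N -> complex.Im p`_n = 0 -> (size (Ip p) <= n)%N.
Proof.
move=> sp0 pn; apply/leq_sizeP => j hj; rewrite coef_Ip.
move: hj; rewrite leq_eqVlt => /orP[/eqP<-//|hj].
by rewrite nth_default // (leq_trans sp0 hj).
Qed.

Theorem cauchy_index (s : seq C) : all (fun r => complex.Im r != 0) s ->
  \sum_(r <- s) sgz (complex.Im r) =
  cindexR (Rp (\prod_(r <- s) ('X - r%:P))) (Ip (\prod_(r <- s) ('X - r%:P)))
  + Ep (Ip (\prod_(r <- s) ('X - r%:P))) (size s).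
Proof.
elim: s => [|r s IH] /=.
  rewrite !big_nil.
  have -> : Ip 1 = 0.
    by apply/polyP => k; rewrite coef_Ip coefC coef0; case: (k == 0)%N.
  by rewrite cindexRpC /Ep /sp /sm lead_coef0 mulr0 sgz0.
case/andP => r0 /IH {}IH.
set h := \prod_(r <- s) ('X - r%:P).
have hm : h \is monic by apply: monic_prod_XsubC.
have sh : size h = (size s).+1 by rewrite size_prod_XsubC.
have hn : h`_(size s) = 1 by move: hm; rewrite monicE lead_coefE sh /= => /eqP.
have sU : size (Rp h) = (size s).+1.
  apply/eqP; rewrite eqn_leq; apply/andP; split.
    by rewrite -sh /Rp size_poly.
  rewrite ltnNge; apply/negP => /leq_sizeP /(_ (size s) (leqnn _)).
  by rewrite coef_Rp hn => /eqP; rewrite oner_eq0.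
have lU : lead_coef (Rp h) = 1 by rewrite lead_coefE sU /= coef_Rp hn.
have sV : (size (Ip h) <= size s)%N.
  apply: size_Ip_le; first by rewrite sh.
  by move: hm; rewrite monicE lead_coefE sh /= => /eqP ->.
rewrite big_cons IH big_cons prod_step Rp_cpi Ip_cpi !mul_polyC.
rewrite cindexR_lin // -addrA [sgz _ + _]addrC -addrA.
rewrite -/h; congr (_ + _); rewrite addrC.
exact: E_step.
Qed.

Lemma in_rootsR_root (p : {poly R}) x : x \in rootsR p -> root p x.
Proof.
have [->|p0] := eqVneq p 0; first by rewrite rootsR0.
by rewrite -(roots_on_rootsR p0 x) => /andP[].
Qed.

Lemma cindexR_pos (q p : {poly R}) : (forall x, root p x -> 0 < q.[x]) ->
  cindexR q p = crossR p.
Proof.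
move=> hq.
have -> : cindexR q p = cindexR 1 p.
  rewrite /cindexR; apply: eq_big_seq => x /in_rootsR_root rx.
  have qx := hq x rx.
  have q0 : q != 0 by apply/eqP => q0; move: qx; rewrite q0 horner0 ltxx.
  rewrite /jump q0 oner_neq0 mu_polyC (_ : \mu_x q = 0%N); last first.
    by apply/eqP; rewrite -leqn0 leqNgt mu_gt0 // /root gt_eqF.
  by rewrite mul1r sgp_right_mul sgp_rightNroot ?gtr0_sg ?mul1r // /root gt_eqF.
by rewrite cindexR_rec mulr1 -[1]/(1%:P) cindexRpC addr0.
Qed.

Lemma crossR_Ep_even (W : {poly R}) n : ~~ odd n -> crossR W + Ep W n = 0.
Proof.
move=> ne; rewrite crossR_int /Ep -signr_odd (negPf ne) expr0 mul1r.
have [->|W0] := eqVneq W 0; first by rewrite /sp /sm lead_coef0 mulr0 sgz0.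
have l0 : lead_coef W != 0 by rewrite lead_coef_eq0.
have s0 : ((-1) ^+ (size W).-1 : R) != 0 by rewrite signr_eq0.
have := sgz_pm1 l0; have := sgz_pm1 (mulf_neq0 s0 l0).
rewrite /sp /sm; set u := sgz _; set v := sgz _.
by rewrite !inE => /orP[]/eqP-> /orP[]/eqP->.
Qed.

Theorem half_plane (s : seq C) : ~~ odd (size s) ->
  (forall x : R, complex.Im (\prod_(r <- s) ('X - r%:P)).[x%:C] = 0 ->
                 0 < complex.Re (\prod_(r <- s) ('X - r%:P)).[x%:C]) ->
  all (fun r => complex.Im r != 0) s /\ \sum_(r <- s) sgz (complex.Im r) = 0.
Proof.
set h := \prod_(r <- s) _ => ev hpos.
have allI : all (fun r => complex.Im r != 0) s.
  apply/allP => r rs; apply/negP => /eqP Ir.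
  have hr : h.[(complex.Re r)%:C] = 0.
    have -> : (complex.Re r)%:C = r by move: Ir; case: (r) => a b /= ->.
    by apply/eqP; rewrite -/(root h r) root_prod_XsubC.
  by have := hpos (complex.Re r); rewrite hr /= => /(_ erefl); rewrite ltxx.
split => //.
rewrite cauchy_index // -/h cindexR_pos ?crossR_Ep_even //.
by move=> x; rewrite /root horner_Ip horner_Rp => /eqP; apply: hpos.
Qed.

Lemma ii_C : ('i * 'i : C) = -1.
Proof.
by apply/eqP; rewrite eq_complex /= !(mul0r, mul1r, subr0, addr0, add0r, mulr0, subrr, oppr0, sub0r) !eqxx.
Qed.

Lemma horner_prodX (s : seq C) z : (\prod_(r <- s) ('X - r%:P)).[z] = \prod_(r <- s) (z - r).
Proof. by rewrite horner_prod; apply: eq_bigr => r _; rewrite hornerXsubC. Qed.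

Lemma prodC_sq (s : seq C) z :
  \prod_(r <- s) (z * z - r * r) = (-1) ^+ (size s) * (\prod_(r <- s) (z - r)) * \prod_(r <- s) (- z - r).
Proof.
elim: s => [|r s IH]; first by rewrite !big_nil expr0 !mul1r.
rewrite !big_cons IH /= exprS.
transitivity (- ((z - r) * (- z - r)) * ((-1) ^+ size s * \prod_(j <- s) (z - j) * \prod_(j <- s) (- z - j))).
  by congr (_ * _); ring.
ring.
Qed.

Lemma prod_rot (s : seq C) y :
  \prod_(r <- s) ('i * y - r) = 'i ^+ (size s) * \prod_(r <- s) (y - (- 'i * r)).
Proof.
elim: s => [|r s IH]; first by rewrite !big_nil expr0 mul1r.
rewrite !big_cons IH /= exprS.
have -> : 'i * y - r = 'i * (y - (- 'i * r)).
  by rewrite mulrBr mulNr mulrN opprK mulrA ii_C mulN1r.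
ring.
Qed.

Lemma prod_pos (a b : C) : complex.Im b = - complex.Im a ->
  (complex.Im a = 0 -> 0 < complex.Re a) -> (complex.Im b = 0 -> 0 < complex.Re b) ->
  complex.Im (a * b) = 0 -> 0 < complex.Re (a * b).
Proof.
case: a => a1 a2; case: b => b1 b2 /= -> ha hb.
have [a20|a20] := eqVneq a2 0.
  move=> _; have h1 := ha a20; have h2 : 0 < b1 by apply: hb; rewrite a20 oppr0.
  by rewrite a20 oppr0 !mulr0 subr0 mulr_gt0.
move=> him.
have eb : b1 = a1.
  have : a2 * (b1 - a1) = 0 by rewrite -him; ring.
  by move/eqP; rewrite mulf_eq0 (negPf a20) /= subr_eq0 => /eqP.
rewrite eb.
have : 0 < a2 * a2 by rewrite -expr2 exprn_even_gt0.
have := sqr_ge0 a1; rewrite expr2; nra.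
Qed.

Lemma sgz_sq_Im (r : C) : sgz (complex.Im (r * r)) = sgz (complex.Re r) * sgz (complex.Im r).
Proof.
case: r => a b /=.
rewrite (_ : a * b + b * a = 2 * (a * b)); last by ring.
by rewrite sgzM sgzM gtr0_sgz // mul1r.
Qed.

Lemma Im_rot (r : C) : complex.Im (- 'i * r) = - complex.Re r.
Proof. case: r => a b /=; ring. Qed.

Lemma count4 (s : seq C) :
  all (fun r => complex.Im r != 0) s -> all (fun r => complex.Re r != 0) s ->
  4 * (count (fun r => (0 < complex.Re r) && (0 < complex.Im r)) s)%:Z =
  \sum_(r <- s) (1 + sgz (complex.Re r)) * (1 + sgz (complex.Im r)).
Proof.
elim: s => [|r s IH]; first by rewrite big_nil.
rewrite /= big_cons => /andP[ri si] /andP[rr sr].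
rewrite PoszD mulrDr IH //; congr (_ + _).
case: (sgzP (complex.Re r)) rr => // hr _; case: (sgzP (complex.Im r)) ri => // hi _ //=;
  rewrite ?hr ?hi /= ?(ltW hr) ?(ltW hi) ?(lt_gtF hr) ?(lt_gtF hi) //=.
Qed.

Theorem quadrant_count (s : seq C) : size s = 4%N ->
  let q := \prod_(r <- s) ('X - r%:P) in
  (forall x : R, complex.Im q.[x%:C] = 0 -> 0 < complex.Re q.[x%:C]) ->
  (forall y : R, complex.Im q.[(0 +i* y)%C] = 0 -> 0 < complex.Re q.[(0 +i* y)%C]) ->
  (forall x : R, complex.Im q.[(- x)%:C] = - complex.Im q.[x%:C]) ->
  (forall y : R, complex.Im q.[(0 +i* (- y))%C] = - complex.Im q.[(0 +i* y)%C]) ->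
  count (fun r => (0 < complex.Re r) && (0 < complex.Im r)) s = 1%N.
Proof.
move=> s4 q H1 H2 H3 H4.
have ev : ~~ odd (size s) by rewrite s4.
have [allI sI] := half_plane ev H1.
have iyE : forall y : R, (0 +i* y)%C = 'i * y%:C.
  by move=> y; apply/eqP; rewrite eq_complex /=; apply/andP; split; apply/eqP; ring.
have q2E : forall x : R, (\prod_(r <- map (fun r => - 'i * r) s) ('X - r%:P)).[x%:C]
                         = q.[(0 +i* x)%C].
  move=> x; rewrite !horner_prodX iyE prod_rot s4 big_map.
  have i4 : ('i : C) ^+ 4 = 1 by rewrite !exprS expr0 mulr1 ii_C mulrN1 mulrN ii_C opprK.
  by rewrite i4 mul1r.
have ev2 : ~~ odd (size (map (fun r => - 'i * r) s)) by rewrite size_map s4.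
have [allI2 sI2] := half_plane ev2 (fun x => ltac:(rewrite q2E; exact: H2 x)).
have ev3 : ~~ odd (size (map (fun r => r * r) s)) by rewrite size_map s4.
have q3E : forall z : C, (\prod_(r <- map (fun r => r * r) s) ('X - r%:P)).[z * z]
                         = q.[z] * q.[- z].
  move=> z; rewrite !horner_prodX big_map prodC_sq s4.
  by rewrite (_ : (-1) ^+ 4 = 1 :> C) ?mul1r // -signr_odd.
have H3' : forall x : R, complex.Im (\prod_(r <- map (fun r => r * r) s) ('X - r%:P)).[x%:C] = 0 ->
             0 < complex.Re (\prod_(r <- map (fun r => r * r) s) ('X - r%:P)).[x%:C].
  move=> x.
  have [x0|x0] := leP 0 x.
    have -> : x%:C = (Num.sqrt x)%:C * (Num.sqrt x)%:C by rewrite -rmorphM /= -expr2 sqr_sqrtr.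
    rewrite q3E; apply: prod_pos.
    - by rewrite -rmorphN H3.
    - exact: H1.
    - by rewrite -rmorphN; apply: H1.
  have -> : x%:C = (0 +i* Num.sqrt (- x))%C * (0 +i* Num.sqrt (- x))%C.
    apply/eqP; rewrite eq_complex /= !(mul0r, mulr0, subr0, add0r, addr0, sub0r, mul1r, mulr1).
    by rewrite -expr2 sqr_sqrtr ?opprK ?eqxx // oppr_ge0 ltW.
  rewrite q3E; apply: prod_pos.
  - have -> : (- (0 +i* Num.sqrt (- x)))%C = (0 +i* (- Num.sqrt (- x)))%C.
      by apply/eqP; rewrite eq_complex /= oppr0 !eqxx.
    exact: H4.
  - exact: H2.
  - have -> : (- (0 +i* Num.sqrt (- x)))%C = (0 +i* (- Num.sqrt (- x)))%C.
      by apply/eqP; rewrite eq_complex /= oppr0 !eqxx.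
    exact: H2.
have [_ sI3] := half_plane ev3 H3'.
rewrite big_map in sI2; rewrite big_map in sI3.
have allR : all (fun r => complex.Re r != 0) s.
  apply/allP => r rs; move/allP: allI2 => /(_ (- 'i * r)).
  by rewrite map_f // Im_rot oppr_eq0; apply.
have sR : \sum_(r <- s) sgz (complex.Re r) = 0.
  have -> : \sum_(r <- s) sgz (complex.Re r) = - \sum_(r <- s) sgz (complex.Im (- 'i * r)).
    by rewrite -sumrN; apply: eq_bigr => r _; rewrite Im_rot sgzN opprK.
  by rewrite sI2 oppr0.
have := count4 allI allR.
under eq_bigr do rewrite mulrDr !mulrDl !mul1r mulr1 -sgz_sq_Im.
rewrite !big_split /= sI sI3 sR big_const_seq count_predT s4 /= !addr0.
set c := count _ _; move=> h; lia.
Qed.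
End CP.

Section P1.
Variable R : rcfType.

Lemma sqrt_lt_sq (u v : R) : 0 <= u -> 0 < v -> u < v ^+ 2 -> Num.sqrt u < v.
Proof.
move=> u0 v0 h; have s0 := sqrtr_ge0 u; have s2 := sqr_sqrtr u0.
move: s2 h; set s := Num.sqrt u; rewrite !expr2 => <- h; nra.
Qed.

Lemma sq_lt_sqrt (u v : R) : 0 <= u -> 0 <= v -> Num.sqrt u < v -> u < v ^+ 2.
Proof.
move=> u0 v0 h; have s0 := sqrtr_ge0 u; have s2 := sqr_sqrtr u0.
move: s2 h; set s := Num.sqrt u; rewrite !expr2 => <- h.
have hv : 0 < v - s by rewrite subr_gt0.
have hv2 : 0 < v + s by apply: ltr_wpDr s0 (le_lt_trans s0 h).
have := mulr_gt0 hv hv2.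
rewrite mulrDr !mulrBl; lra.
Qed.

Lemma K_le (m k : nat) :
  (2 * k + 1)%:R + Num.sqrt ((6 * k ^ 2 + 6 * k + 1)%:R) <= (m%:R : R) ->
  0 < (m%:R : R) /\ Kmk R m k <= 1 / 2.
Proof.
move=> hm.
have s0 := sqrtr_ge0 ((6 * k ^ 2 + 6 * k + 1)%:R : R).
have k0 : (0 : R) <= k%:R by rewrite ler0n.
have m0 : (0 : R) < m%:R.
  apply: lt_le_trans hm; rewrite ltr_pwDl //= ltr0n; lia.
split => //.
have hsq : ((6 * k ^ 2 + 6 * k + 1)%:R : R) <= (m%:R - (2 * k + 1)%:R) ^+ 2.
  rewrite -[X in X <= _]sqr_sqrtr ?ler0n // ler_pXn2r ?nnegrE //.
    by rewrite lerBrDl.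
  by rewrite subr_ge0 (le_trans _ hm) // lerDl.
rewrite /Kmk.
have e : forall A B : R, (m%:R)^-1 * (A + B / m%:R) = (A * m%:R + B) / (m%:R * m%:R).
  by move=> A B; field; rewrite gt_eqF.
rewrite e ler_pdivrMr ?mulr_gt0 //.
move: hsq; rewrite !natrD !natrM ?natrX.
set K := k%:R; set M := m%:R => hsq.
rewrite expr2 in hsq; nra.
Qed.

Lemma Kmk_ge0 (m k : nat) : 0 <= Kmk R m k.
Proof. by rewrite /Kmk mulr_ge0 ?invr_ge0 ?ler0n // addr_ge0 ?ler0n // divr_ge0 ?ler0n. Qed.

Lemma llE (m k : nat) : (0 : R) < m%:R ->
  (((m + k) * (m + k + 1))%:R : R) = m%:R ^+ 2 * (1 + Kmk R m k).
Proof.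
move=> m0; rewrite /Kmk !natrD !natrM !natrD.
by field; rewrite gt_eqF.
Qed.

Lemma part1 (m k : nat) (x : R) :
  (2 * k + 1)%:R + Num.sqrt ((6 * k ^ 2 + 6 * k + 1)%:R) <= (m%:R : R) ->
  0 <= x -> x < 1 -> a_bound R m k < x ->
  I_low R m k < (m%:R * x) / (2 * (1 + Num.sqrt (1 - x ^+ 2))).
Proof.
move=> hm x0 x1 hab.
have [m0 KK] := K_le hm.
have K0 := Kmk_ge0 m k.
set K := Kmk R m k in KK K0 hab *.
have hsq : 24 * (1 + K) < x ^+ 2 * (5 + 2 * K) ^+ 2.
  move: hab; rewrite /a_bound -/K.
  have u0 := sqrtr_ge0 (6 : R); have u2 : Num.sqrt (6 : R) ^+ 2 = 6 by rewrite sqr_sqrtr // ler0n.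
  have v0 := sqrtr_ge0 (1 + K); have v2 : Num.sqrt (1 + K) ^+ 2 = 1 + K by rewrite sqr_sqrtr // addr_ge0.
  set u := Num.sqrt 6 in u0 u2 *; set v := Num.sqrt (1 + K) in v0 v2 *.
  have d0 : 0 < 1 + 2 / 5 * K by rewrite ltr_pwDl // mulr_ge0 // divr_ge0 // ler0n.
  rewrite ltr_pdivrMr // => h.
  have w0 : 0 <= 2 * u / 5 * v by rewrite mulr_ge0 // divr_ge0 ?mulr_ge0 ?ler0n.
  have h2 : (2 * u / 5 * v) ^+ 2 < (x * (1 + 2 / 5 * K)) ^+ 2.
    have xd0 : 0 <= x * (1 + 2 / 5 * K) by rewrite mulr_ge0 // ltW.
    by rewrite ltr_pXn2r ?nnegrE.

  have E1 : (2 * u / 5 * v) ^+ 2 = 24 * (1 + K) * 25^-1.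
    have -> : (2 * u / 5 * v) ^+ 2 = 4 / 25 * u ^+ 2 * v ^+ 2 by field.
    by rewrite u2 v2; field.
  have E2 : (x * (1 + 2 / 5 * K)) ^+ 2 = x ^+ 2 * (5 + 2 * K) ^+ 2 * 25^-1.
    by field.
  by move: h2; rewrite E1 E2 ltr_pM2r // invr_gt0 ltr0n.
have x2 : x ^+ 2 < 1 by rewrite expr2; nra.
have c0 := sqrtr_ge0 (1 - x ^+ 2).
have c2 : Num.sqrt (1 - x ^+ 2) ^+ 2 = 1 - x ^+ 2 by rewrite sqr_sqrtr // subr_ge0 ltW.
set c := Num.sqrt (1 - x ^+ 2) in c0 c2 *.
set g := 2 / 3 * (1 + K).
have g1 : g <= 1 by rewrite /g; lra.
have g0 : 0 < g by rewrite /g; lra.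
have h4 : 4 * g < x ^+ 2 * (1 + g) ^+ 2.
  have -> : 4 * g = 24 * (1 + K) / 9 by rewrite /g; field.
  have -> : x ^+ 2 * (1 + g) ^+ 2 = x ^+ 2 * (5 + 2 * K) ^+ 2 / 9 by rewrite /g; field.
  by rewrite ltr_pM2r // invr_gt0 ltr0n.
have h5 : c * (1 + g) < 1 - g.
  have : c ^+ 2 * (1 + g) ^+ 2 < (1 - g) ^+ 2.
    by rewrite c2; move: h4; rewrite !expr2; nra.
  rewrite !expr2 => h; nra.
have h6 : g * (1 + c) ^+ 2 < x ^+ 2.
  have -> : x ^+ 2 = (1 - c) * (1 + c).
    by move: c2; rewrite !expr2 => c2; rewrite mulrDr !mulrBl; lra.
  by rewrite expr2 mulrA ltr_pM2r; [nra | lra].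
have xpos : 0 < x.
  rewrite lt0r x0 andbT; apply/eqP => xz; move: hsq; rewrite xz expr2 !mul0r; lra.
rewrite /I_low llE // -/K.
apply: sqrt_lt_sq.
- apply: mulr_ge0; first by rewrite invr_ge0; lra.
  by apply: mulr_ge0; [exact: sqr_ge0 | exact: addr_ge0 ler01 K0].
- apply: divr_gt0; first exact: mulr_gt0 m0 xpos.
  apply: mulr_gt0; lra.
have -> : (m%:R * x / (2 * (1 + c))) ^+ 2 = m%:R ^+ 2 * x ^+ 2 / (4 * (1 + c) ^+ 2).
  by field; lra.
rewrite ltr_pdivlMr; last by rewrite mulr_gt0 // exprn_gt0 //; lra.
have m2 : 0 < (m%:R : R) ^+ 2 by rewrite exprn_gt0.
have -> : 6^-1 * (m%:R ^+ 2 * (1 + K)) * (4 * (1 + c) ^+ 2) = m%:R ^+ 2 * (g * (1 + c) ^+ 2).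
  by rewrite /g; field.
by rewrite ltr_pM2l.
Qed.
End P1.

Section F.
Variable R : rcfType.
Local Open Scope complex_scope.

Lemma size_CXn (c : R[i]) k : (size (c%:P * 'X^k)%R <= k.+1)%N.
Proof. by rewrite mul_polyC (leq_trans (size_scale_leq _ _)) // size_polyXn. Qed.

Lemma qshape (c1 c2 c3 c4 : R[i]) :
  let q := 'X^4 + c1%:P * 'X * (c2%:P * ('X^2 + 1) + c3%:P * ('X^2 - 1)) + c4%:P * 'X^2 + 1 in
  lead_coef q = 1 /\ size q = 5%N.
Proof.
move=> q.
have -> : q = 'X^4 + ((c1 * (c2 + c3))%:P * 'X^3 + c4%:P * 'X^2 + (c1 * (c2 - c3))%:P * 'X^1 + 1%:P).
  rewrite /q !polyCM polyCD polyCB polyC1 !expr1 !exprS expr0 mulr1; ring.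
have sT : (size ((c1 * (c2 + c3))%:P * 'X^3 + c4%:P * 'X^2 + (c1 * (c2 - c3))%:P * 'X^1 + 1%:P)%R < size ('X^4 : {poly R[i]}))%N.
  rewrite size_polyXn ltnS.
  have h3 := size_CXn (c1 * (c2 + c3)) 3; have h2 := size_CXn c4 2.
  have h1 := size_CXn (c1 * (c2 - c3)) 1; have h0 := size_polyC_leq1 (1 : R[i]).
  apply: (leq_trans (size_polyD _ _)); rewrite geq_max; apply/andP; split; last by apply: leq_trans h0 _.
  apply: (leq_trans (size_polyD _ _)); rewrite geq_max; apply/andP; split; last by apply: leq_trans h1 _.
  apply: (leq_trans (size_polyD _ _)); rewrite geq_max; apply/andP; split; last by apply: leq_trans h2 _.
  exact: h3.
by rewrite lead_coefDl // size_polyDl // lead_coefXn size_polyXn.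
Qed.

Definition qgen (c4 A c2 : R) (al : R[i]) : {poly R[i]} :=
  'X^4 + ((c4%:C)%C)%:P * 'X * (((A%:C)%C)%:P * ('X^2 + 1) + al%:P * ('X^2 - 1)) + ((c2%:C)%C)%:P * 'X^2 + 1.

Lemma qgen_eval c4 A c2 al z : (qgen c4 A c2 al).[z] =
  z ^+ 4 + (c4%:C)%C * z * ((A%:C)%C * (z ^+ 2 + 1) + al * (z ^+ 2 - 1)) + (c2%:C)%C * z ^+ 2 + 1.
Proof. by rewrite /qgen !hornerE. Qed.

Lemma qgen_Re_real c4 A c2 a1 a2 (x : R) :
  complex.Re (qgen c4 A c2 (a1 +i* (- a2))).[x%:C] =
  x ^+ 4 + c4 * x * (A * (x ^+ 2 + 1) + a1 * (x ^+ 2 - 1)) + c2 * x ^+ 2 + 1.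
Proof. rewrite qgen_eval !exprS !expr0 /=; ring. Qed.

Lemma qgen_Im_real c4 A c2 a1 a2 (x : R) :
  complex.Im (qgen c4 A c2 (a1 +i* (- a2))).[x%:C] = - (c4 * a2 * x * (x ^+ 2 - 1)).
Proof. rewrite qgen_eval !exprS !expr0 /=; ring. Qed.

Lemma qgen_Re_imag c4 A c2 a1 a2 (y : R) :
  complex.Re (qgen c4 A c2 (a1 +i* (- a2))).[(0 +i* y)] =
  y ^+ 4 - c2 * y ^+ 2 + 1 - c4 * a2 * y * (y ^+ 2 + 1).
Proof. rewrite qgen_eval !exprS !expr0 /=; ring. Qed.

Lemma qgen_Im_imag c4 A c2 a1 a2 (y : R) :
  complex.Im (qgen c4 A c2 (a1 +i* (- a2))).[(0 +i* y)] =
  c4 * y * (A * (1 - y ^+ 2) - a1 * (y ^+ 2 + 1)).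
Proof. rewrite qgen_eval !exprS !expr0 /=; ring. Qed.

Lemma extract (s : seq R[i]) (P : pred R[i]) : count P s = 1%N ->
  exists z, [/\ z \in s, P z, count_mem z s = 1%N & forall w, w \in s -> P w -> w = z].
Proof.
rewrite -size_filter.
case Hf: (filter P s) => [|z [|y t]] //= _.
have zf : z \in filter P s by rewrite Hf mem_head.
rewrite mem_filter in zf; case/andP: zf => Pz zs.
exists z; split => //.
- apply/eqP; rewrite eqn_leq; apply/andP; split.
    have <- : count P s = 1%N by rewrite -size_filter Hf.
    by apply: sub_count => w /= /eqP ->.
  by rewrite lt0n; apply/eqP => /count_memPn; rewrite zs.
- move=> w ws Pw.
  have : w \in filter P s by rewrite mem_filter Pw ws.
  by rewrite Hf inE => /eqP.
Qed.

Theorem qgen_count c4 A c2 a1 a2 : 0 < c4 -> 0 < a2 -> A < a1 -> 0 <= A + a1 ->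
  0 < 2 + c2 + 2 * c4 * A -> 0 < 2 + c2 - 2 * c4 * A ->
  let q := qgen c4 A c2 (a1 +i* (- a2)) in
  exists z : R[i],
    [/\ 0 < complex.Re z, 0 < complex.Im z, root q z, mup z q = 1%N &
        forall w : R[i], 0 < complex.Re w -> 0 < complex.Im w -> root q w -> w = z].
Proof.
move=> c40 a20 Aa1 Aa1' hp hm q.
have [lq sq] : lead_coef q = 1 /\ size q = 5%N by apply: qshape.
have [s qE] := closed_field_poly_normal q.
rewrite lq scale1r in qE.
have s4 : size s = 4%N.
  by have := sq; rewrite qE size_prod_XsubC => -[].
have H1 : forall x : R, complex.Im (\prod_(r <- s) ('X - r%:P)).[x%:C] = 0 ->
                     0 < complex.Re (\prod_(r <- s) ('X - r%:P)).[x%:C].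
  move=> x; rewrite -qE qgen_Im_real qgen_Re_real => h.
  have : x * (x ^+ 2 - 1) = 0.
    apply/eqP; move/eqP: h; rewrite oppr_eq0 -mulrA mulf_eq0 (gt_eqF (mulr_gt0 c40 a20)) /=.
    done.
  move/eqP; rewrite mulf_eq0 => /orP[/eqP->|/eqP x21].
    rewrite !expr0n /= !(mulr0, mul0r, add0r, addr0); exact: ltr01.
  have -> : x ^+ 4 + c4 * x * (A * (x ^+ 2 + 1) + a1 * (x ^+ 2 - 1)) + c2 * x ^+ 2 + 1
           = 2 + c2 + 2 * c4 * A * x + (x ^+ 2 - 1) * (x ^+ 2 + 1 + c4 * x * A + c4 * x * a1 + c2).
    ring.
  rewrite x21 mul0r addr0.
  have : (x - 1) * (x + 1) = 0 by rewrite -x21; ring.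
  move/eqP; rewrite mulf_eq0 => /orP[/eqP|/eqP] hx.
    have -> : x = 1 by rewrite -(subrK 1 x) hx add0r.
    by rewrite mulr1.
  have -> : x = -1 by rewrite -(addrK 1 x) hx sub0r.
  by rewrite mulrN1 -[_ + _ + - _]/(2 + c2 - 2 * c4 * A).
have H2 : forall y : R, complex.Im (\prod_(r <- s) ('X - r%:P)).[(0 +i* y)] = 0 ->
                     0 < complex.Re (\prod_(r <- s) ('X - r%:P)).[(0 +i* y)].
  move=> y; rewrite -qE qgen_Im_imag qgen_Re_imag => h.
  have hb : A * (1 - y ^+ 2) - a1 * (y ^+ 2 + 1) < 0.
    have := sqr_ge0 y; nra.
  have y0 : y = 0.
    move/eqP: h; rewrite mulf_eq0 (lt_eqF hb) orbF mulf_eq0 (gt_eqF c40) /= => /eqP //.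
  rewrite y0.
  have -> : (0 : R) ^+ 4 - c2 * 0 ^+ 2 + 1 - c4 * a2 * 0 * (0 ^+ 2 + 1) = 1 by ring.
  exact: ltr01.
have H3 : forall x : R, complex.Im (\prod_(r <- s) ('X - r%:P)).[(- x)%:C] =
                      - complex.Im (\prod_(r <- s) ('X - r%:P)).[x%:C].
  by move=> x; rewrite -qE !qgen_Im_real; ring.
have H4 : forall y : R, complex.Im (\prod_(r <- s) ('X - r%:P)).[(0 +i* (- y))] =
                      - complex.Im (\prod_(r <- s) ('X - r%:P)).[(0 +i* y)].
  by move=> y; rewrite -qE !qgen_Im_imag; ring.
have := quadrant_count s4 H1 H2 H3 H4.
case/extract => z [zs /andP[zr zi] zc zu].
exists z; split => //.
- by rewrite qE root_prod_XsubC.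
- by rewrite qE mu_prod_XsubC.
- move=> w wr wi; rewrite qE root_prod_XsubC => ws.
  by apply: zu => //; rewrite wr wi.
Qed.
End F.

Theorem mainTheorem11 (R : rcfType) (M a : R) (m k n : nat) :
  0 < M ->
  (2 * k + 1)%:R + Num.sqrt ((6 * k ^ 2 + 6 * k + 1)%:R) <= (m%:R : R) ->
  0 <= a -> a < M ->
  a_bound R m k < a / M -> a / M < 1 ->
  I_low R m k < I_high M a m /\
  (forall mu : R, 0 < mu ->
     I_low R m k < mu * M -> mu * M < I_high M a m ->
     exists z : R[i],
       [/\ 0 < complex.Re z, 0 < complex.Im z, root (qKerr M mu a m k n) z,
           mup z (qKerr M mu a m k n) = 1%N &
           forall w : R[i], 0 < complex.Re w -> 0 < complex.Im w ->
             root (qKerr M mu a m k n) w -> w = z]).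
Proof.
move=> M0 hm a0 aM hab hx1.
have x0 : 0 <= a / M by rewrite divr_ge0 // ltW.
have a2E : a ^+ 2 / M ^+ 2 = (a / M) ^+ 2 by rewrite expr_div_n.
have Ih : I_high M a m = m%:R * (a / M) / (2 * (1 + Num.sqrt (1 - (a / M) ^+ 2))).
  by rewrite /I_high a2E mulrA.
split; first by rewrite Ih; apply: part1.
move=> mu mu0 hlow hhigh.
have [m0 _] := K_le hm.
set x := a / M in x0 hab hx1 a2E Ih.
have x2 : x ^+ 2 < 1 by rewrite expr2; nra.
have c0 : 0 < Num.sqrt (1 - x ^+ 2) by rewrite sqrtr_gt0 subr_gt0.
set c := Num.sqrt (1 - x ^+ 2) in c0 Ih.
have muM : 0 < mu * M by rewrite mulr_gt0.
set L : R := ((m + k) * (m + k + 1))%:R.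
have L0 : 0 <= L by rewrite ler0n.
have hL : 6^-1 * L < (mu * M) ^+ 2.
  apply: sq_lt_sqrt; [by rewrite mulr_ge0 // invr_ge0 ler0n | exact: ltW | exact: hlow].
set b := betaR M mu (m + k).
have b0 : 0 < b.
  rewrite /b /betaR -/L subr_gt0 ltr_pdivrMr ?mulr_gt0 ?exprn_gt0 //.
  by move: hL; rewrite exprMn; lra.
have b6 : b <= 6.
  rewrite /b /betaR -/L lerBlDr lerDl; apply: divr_ge0 => //.
  by rewrite mulr_ge0 // exprn_ge0 // ltW.
set e := epsR M a.
have eE : e = 2 * c by rewrite /e /epsR a2E.
set a1 := alpha1 M mu a m.
have ha1 : 2 + e < a1.
  rewrite eE /a1 /alpha1.
  move: hhigh; rewrite Ih ltr_pdivlMr; last by rewrite mulr_gt0 //; lra.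
  move=> h.
  have -> : m%:R * a / (mu * M ^+ 2) = m%:R * x / (mu * M).
    by rewrite /x; field; rewrite !gt_eqF.
  rewrite ltr_pdivlMr //; lra.
set a2 := alpha2 M mu a n.
have ha2 : 0 < a2.
  rewrite /a2 /alpha2 a2E -/c; apply: mulr_gt0 => //; apply: divr_gt0 => //.
  by rewrite ltr0n addn1.
have D0 : 0 < b + e by rewrite eE; lra.
have -> : qKerr M mu a m k n = qgen (4 / (b + e)) (2 + e) (2 * (16 - b + 3 * e) / (b + e)) (a1 +i* (- a2))%C.
  by [].
apply: qgen_count => //.
- by rewrite divr_gt0 //; lra.
- by rewrite eE; lra.
- have h1 : 0 < 2 * (16 - b + 3 * e) / (b + e) by rewrite divr_gt0 //; rewrite eE; lra.
  have h2 : 0 < 4 / (b + e) by rewrite divr_gt0 //; lra.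
  have h3 : 0 < 2 + e by rewrite eE; lra.
  have := mulr_gt0 h2 h3; nra.
- have -> : 2 + 2 * (16 - b + 3 * e) / (b + e) - 2 * (4 / (b + e)) * (2 + e) = 16 / (b + e).
    by field; rewrite gt_eqF.
  by rewrite divr_gt0 //; lra.
Qed.
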